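(* Let $R>0$, $S^2(R)=\{y\in\mathbb{R}^3:|y|=R\}$, and fix $x\in\mathbb{R}^3$ with $r=|x|$, $0<r\neq R$. For every real $b\neq0$, $$\int_{S^2(R)}\omega(x,y)^{1+ib}\,dS_y=\frac{2\pi R}{r}\cdot\frac{|R^2-r^2|}{b}\cdot\sin\!\left(b\ln\frac{R+r}{|R-r|}\right),$$ and $$\int_{S^2(R)}\omega(x,y)\,dS_y=\frac{2\pi R}{r}\cdot|R^2-r^2|\cdot\ln\frac{R+r}{|R-r|}.$$
   Context: For $x\neq y$, $\omega(x,y)=\left|\dfrac{|x|^2-|y|^2}{|x-y|^2}\right|$; $dS_y$ is the surface measure on $S^2(R)$; $\omega^{1+ib}=e^{(1+ib)\ln\omega}$. *)

(* Defs.v *)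
From Stdlib Require Import Reals.
From Coquelicot Require Import Coquelicot.
Open Scope R_scope.

Definition pt := (R * R * R)%type.

Definition nsq (x : pt) : R :=
  let '(x1, x2, x3) := x in x1 ^ 2 + x2 ^ 2 + x3 ^ 2.
Definition norm3 (x : pt) : R := sqrt (nsq x).

Definition dsq (x y : pt) : R :=
  let '(x1, x2, x3) := x in let '(y1, y2, y3) := y in
  (x1 - y1) ^ 2 + (x2 - y2) ^ 2 + (x3 - y3) ^ 2.

Definition omega (x y : pt) : R := Rabs ((nsq x - nsq y) / dsq x y).

Definition Cexp (w : C) : C :=
  (exp (fst w) * cos (snd w), exp (fst w) * sin (snd w)).

Definition Cpow_pos (a : R) (s : C) : C := Cexp (Cmult s (RtoC (ln a))).

Definition sph (Rad th ph : R) : pt :=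
  (Rad * sin th * cos ph, Rad * sin th * sin ph, Rad * cos th).

(* Surface integral over S^2(Rad) w.r.t. the surface measure dS, computed via
   spherical coordinates: dS = Rad^2 sin(th) dth dph. *)
Definition sphere_int (Rad : R) (f : pt -> R) : R :=
  RInt (fun th => RInt (fun ph => f (sph Rad th ph) * (Rad ^ 2 * sin th)) 0 (2 * PI)) 0 PI.

Definition sphere_intC (Rad : R) (f : pt -> C) : C :=
  RInt (V := C_R_CompleteNormedModule)
    (fun th => RInt (V := C_R_CompleteNormedModule)
       (fun ph => scal (Rad ^ 2 * sin th) (f (sph Rad th ph))) 0 (2 * PI)) 0 PI.

(* Main.v *)
Require Import Defs.
From Stdlib Require Import Reals Lra Psatz.
From Coquelicot Require Import Coquelicot.
Open Scope R_scope.

Lemma locR (x : R) (P : R -> Prop) :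
  (exists d : posreal, forall y, Rabs (y - x) < d -> P y) -> locally x P.
Proof.
  intros [d H]. exists d. intros y Hy. apply H. exact Hy.
Qed.

Definition UC3 (g : R -> R -> R -> R) := forall eps : posreal, exists delta : posreal,
  forall x1 y1 z1 x2 y2 z2, Rabs (x2 - x1) < delta -> Rabs (y2 - y1) < delta ->
  Rabs (z2 - z1) < delta -> Rabs (g x2 y2 z2 - g x1 y1 z1) < eps.
Definition BD3 (g : R -> R -> R -> R) := exists M, forall x y z, Rabs (g x y z) <= M.
Definition G3 g := UC3 g /\ BD3 g.

Lemma G3_ext f g : (forall x y z, f x y z = g x y z) -> G3 f -> G3 g.
Proof.
  intros E [U [M B]]. split.
  - intros eps. destruct (U eps) as [d Hd]. exists d. intros. rewrite <- !E. auto.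
  - exists M. intros. rewrite <- E. auto.
Qed.

Lemma G3_const c : G3 (fun _ _ _ => c).
Proof.
  split.
  - intros eps. exists (mkposreal 1 Rlt_0_1). intros. unfold Rminus. rewrite Rplus_opp_r, Rabs_R0. apply cond_pos.
  - exists (Rabs c). intros; lra.
Qed.

Lemma lip_sin a b : Rabs (sin b - sin a) <= Rabs (b - a).
Proof.
  destruct (MVT_abs sin cos a b) as [c [Hc _]].
  - intros; apply derivable_pt_lim_sin.
  - rewrite Hc. pose proof (COS_bound c).
    rewrite <- (Rmult_1_l (Rabs (b - a))) at 2. apply Rmult_le_compat_r. apply Rabs_pos.
    apply Rabs_le; lra.
Qed.

Lemma lip_cos a b : Rabs (cos b - cos a) <= Rabs (b - a).
Proof.
  destruct (MVT_abs cos (fun x => - sin x) a b) as [c [Hc _]].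
  - intros; apply derivable_pt_lim_cos.
  - rewrite Hc. pose proof (SIN_bound c).
    rewrite <- (Rmult_1_l (Rabs (b - a))) at 2. apply Rmult_le_compat_r. apply Rabs_pos.
    apply Rabs_le; lra.
Qed.

Lemma G3_lip1 (f : R -> R) : (forall a b, Rabs (f b - f a) <= Rabs (b - a)) ->
  (forall a, Rabs (f a) <= 1) ->
  G3 (fun x _ _ => f x) /\ G3 (fun _ y _ => f y) /\ G3 (fun _ _ z => f z).
Proof.
  intros L B. repeat split; try (exists 1; intros; apply B);
  intros eps; exists eps; intros; eapply Rle_lt_trans; try apply L; auto.
Qed.

Lemma G3_sin1 : G3 (fun x _ _ => sin x).
Proof. apply (G3_lip1 sin lip_sin). intros; apply Rabs_le, SIN_bound. Qed.
Lemma G3_sin2 : G3 (fun _ y _ => sin y).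
Proof. apply (G3_lip1 sin lip_sin). intros; apply Rabs_le, SIN_bound. Qed.
Lemma G3_sin3 : G3 (fun _ _ z => sin z).
Proof. apply (G3_lip1 sin lip_sin). intros; apply Rabs_le, SIN_bound. Qed.
Lemma G3_cos1 : G3 (fun x _ _ => cos x).
Proof. apply (G3_lip1 cos lip_cos). intros; apply Rabs_le, COS_bound. Qed.
Lemma G3_cos2 : G3 (fun _ y _ => cos y).
Proof. apply (G3_lip1 cos lip_cos). intros; apply Rabs_le, COS_bound. Qed.
Lemma G3_cos3 : G3 (fun _ _ z => cos z).
Proof. apply (G3_lip1 cos lip_cos). intros; apply Rabs_le, COS_bound. Qed.

Lemma G3_plus f g : G3 f -> G3 g -> G3 (fun x y z => f x y z + g x y z).
Proof.
  intros [Uf [Mf Bf]] [Ug [Mg Bg]]. split.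
  - intros eps. assert (He : 0 < eps / 2) by (destruct eps; simpl; lra).
    destruct (Uf (mkposreal _ He)) as [d1 H1]. destruct (Ug (mkposreal _ He)) as [d2 H2].
    assert (Hd : 0 < Rmin d1 d2) by (apply Rmin_pos; apply cond_pos).
    exists (mkposreal _ Hd). simpl. intros.
    pose proof (Rmin_l d1 d2). pose proof (Rmin_r d1 d2).
    assert (A1 : Rabs (x2 - x1) < d1) by lra.
    assert (A2 : Rabs (x2 - x1) < d2) by lra.
    assert (B1 : Rabs (y2 - y1) < d1) by lra.
    assert (B2 : Rabs (y2 - y1) < d2) by lra.
    assert (C1 : Rabs (z2 - z1) < d1) by lra.
    assert (C2 : Rabs (z2 - z1) < d2) by lra.
    specialize (H1 _ _ _ _ _ _ A1 B1 C1). specialize (H2 _ _ _ _ _ _ A2 B2 C2).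
    simpl in H1, H2.
    assert (E : f x2 y2 z2 + g x2 y2 z2 - (f x1 y1 z1 + g x1 y1 z1) = (f x2 y2 z2 - f x1 y1 z1) + (g x2 y2 z2 - g x1 y1 z1)) by ring.
    rewrite E. eapply Rle_lt_trans. apply Rabs_triang. lra.
  - exists (Mf + Mg). intros. eapply Rle_trans. apply Rabs_triang. apply Rplus_le_compat; auto.
Qed.

Lemma G3_mult f g : G3 f -> G3 g -> G3 (fun x y z => f x y z * g x y z).
Proof.
  intros [Uf [Mf Bf]] [Ug [Mg Bg]].
  assert (Mf0 : 0 <= Mf) by (eapply Rle_trans; [apply Rabs_pos|apply (Bf 0 0 0)]).
  assert (Mg0 : 0 <= Mg) by (eapply Rle_trans; [apply Rabs_pos|apply (Bg 0 0 0)]).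
  split.
  - intros eps. set (K := Mf + Mg + 1).
    assert (He : 0 < eps / K) by (unfold K; destruct eps; simpl; apply Rdiv_lt_0_compat; lra).
    destruct (Uf (mkposreal _ He)) as [d1 H1]. destruct (Ug (mkposreal _ He)) as [d2 H2].
    assert (Hd : 0 < Rmin d1 d2) by (apply Rmin_pos; apply cond_pos).
    exists (mkposreal _ Hd). simpl. intros.
    pose proof (Rmin_l d1 d2). pose proof (Rmin_r d1 d2).
    assert (A1 : Rabs (x2 - x1) < d1) by lra.
    assert (A2 : Rabs (x2 - x1) < d2) by lra.
    assert (B1 : Rabs (y2 - y1) < d1) by lra.
    assert (B2 : Rabs (y2 - y1) < d2) by lra.
    assert (C1 : Rabs (z2 - z1) < d1) by lra.
    assert (C2 : Rabs (z2 - z1) < d2) by lra.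
    specialize (H1 _ _ _ _ _ _ A1 B1 C1). specialize (H2 _ _ _ _ _ _ A2 B2 C2).
    simpl in H1, H2.
    set (a := f x1 y1 z1) in *. set (a' := f x2 y2 z2) in *.
    set (b := g x1 y1 z1) in *. set (b' := g x2 y2 z2) in *.
    assert (E : a' * b' - a * b = (a' - a) * b' + a * (b' - b)) by ring.
    rewrite E. eapply Rle_lt_trans. apply Rabs_triang. rewrite !Rabs_mult.
    assert (Hb' : Rabs b' <= Mg) by apply Bg. assert (Ha : Rabs a <= Mf) by apply Bf.
    assert (P1 : Rabs (a' - a) * Rabs b' <= (eps / K) * Mg).
    { apply Rmult_le_compat; try apply Rabs_pos; lra. }
    assert (P2 : Rabs a * Rabs (b' - b) <= Mf * (eps / K)).
    { apply Rmult_le_compat; try apply Rabs_pos; lra. }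
    assert (P3 : eps / K * Mg + Mf * (eps / K) < eps).
    { assert (eps / K * Mg + Mf * (eps / K) = eps * ((Mf + Mg) / K)) as -> by (unfold K; field; lra).
      assert (Q : (Mf + Mg) / K < 1).
      { unfold K. apply Rmult_lt_reg_r with (Mf + Mg + 1). lra. unfold Rdiv. rewrite Rmult_assoc, Rinv_l by lra. lra. }
      destruct eps as [e e0]; simpl in *. nra. }
    lra.
  - exists (Mf * Mg). intros. rewrite Rabs_mult. apply Rmult_le_compat; auto; apply Rabs_pos.
Qed.

Lemma G3_opp f : G3 f -> G3 (fun x y z => - f x y z).
Proof.
  intros H. apply G3_ext with (fun x y z => (-1) * f x y z). intros; ring.
  apply G3_mult; auto. apply G3_const.
Qed.

Lemma G3_minus f g : G3 f -> G3 g -> G3 (fun x y z => f x y z - g x y z).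
Proof. intros. apply G3_plus; auto. apply G3_opp; auto. Qed.

Lemma G3_comp (k : R -> R) s :
  (forall t, -1 <= t <= 1 -> continuous k t) -> UC3 s -> (forall x y z, -1 <= s x y z <= 1) ->
  G3 (fun x y z => k (s x y z)).
Proof.
  intros Hk Us Bs.
  assert (Hk' : forall t, -1 <= t <= 1 -> continuity_pt k t).
  { intros t Ht. apply continuity_pt_filterlim. apply Hk; auto. }
  split.
  - intros eps. destruct (Heine_cor2 Hk' eps) as [d1 Hd1].
    destruct (Us d1) as [d Hd]. exists d. intros.
    rewrite Rabs_minus_sym. apply Hd1; auto. rewrite Rabs_minus_sym. auto.
  - destruct (continuity_ab_maj (fun t => Rabs (k t)) (-1) 1) as [m [Hm _]]. lra.
    intros t Ht. apply (continuity_pt_comp k Rabs). auto. apply Rcontinuity_abs.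
    exists (Rabs (k m)). intros. apply Hm. auto.
Qed.

Lemma UC3_cont3 g x y z : UC3 g -> continuous (fun t => g x y t) z.
Proof.
  intros U. apply continuity_pt_filterlim. apply continuity_pt_locally. intros eps.
  destruct (U eps) as [d Hd]. apply locR. exists d. intros. apply Hd; auto;
  unfold Rminus; rewrite Rplus_opp_r, Rabs_R0; apply cond_pos.
Qed.

Lemma UC3_c2d_13 g y x z : UC3 g -> continuity_2d_pt (fun u v => g u y v) x z.
Proof.
  intros U eps. destruct (U eps) as [d Hd]. exists d. intros. apply Hd; auto;
  unfold Rminus; rewrite Rplus_opp_r, Rabs_R0; apply cond_pos.
Qed.

Lemma UC3_c2d_23 g x y z : UC3 g -> continuity_2d_pt (fun u v => g x u v) y z.
Proof.
  intros U eps. destruct (U eps) as [d Hd]. exists d. intros. apply Hd; auto;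
  unfold Rminus; rewrite Rplus_opp_r, Rabs_R0; apply cond_pos.
Qed.

Lemma UC3_exRInt g x y a b : UC3 g -> ex_RInt (fun t => g x y t) a b.
Proof. intros U. apply (ex_RInt_continuous (V := R_CompleteNormedModule)). intros; apply UC3_cont3; auto. Qed.

Lemma UC3_param g a b x y : UC3 g -> a <= b ->
  continuity_2d_pt (fun u v => RInt (fun t => g u v t) a b) x y.
Proof.
  intros U Hab eps.
  assert (He : 0 < eps / (b - a + 1)) by (destruct eps; simpl; apply Rdiv_lt_0_compat; lra).
  destruct (U (mkposreal _ He)) as [d Hd]. exists d. intros u v Hu Hv.
  rewrite <- (RInt_minus (V := R_CompleteNormedModule)) by (apply UC3_exRInt; auto).
  eapply Rle_lt_trans. apply abs_RInt_le_const with (M := eps / (b - a + 1)); auto.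
  apply (ex_RInt_minus (V := R_NormedModule)); apply UC3_exRInt; auto.
  intros t Ht. left. apply (Hd x y t u v t); auto. unfold Rminus; rewrite Rplus_opp_r, Rabs_R0; apply cond_pos.
  destruct eps as [e He0]; simpl in *.
  assert (E : (b - a) * (e / (b - a + 1)) = e * ((b - a) / (b - a + 1))) by (field; lra).
  rewrite E. assert (Q : (b - a) / (b - a + 1) < 1).
  { apply Rmult_lt_reg_r with (b - a + 1). lra. unfold Rdiv. rewrite Rmult_assoc, Rinv_l by lra. lra. }
  nra.
Qed.

Definition C1on (h h' : R -> R) := forall t, -1 <= t <= 1 -> is_derive h t (h' t) /\ continuous h' t.

Definition S3 g t p := sin g * sin t * cos p + cos g * cos t.

Lemma cs_bound A B P Q : A * A + B * B = 1 -> P * P + Q * Q <= 1 -> -1 <= A * P + B * Q <= 1.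
Proof. intros. pose proof (Rle_0_sqr (A - P)). pose proof (Rle_0_sqr (B - Q)). pose proof (Rle_0_sqr (A + P)). pose proof (Rle_0_sqr (B + Q)). unfold Rsqr in *. split; nra. Qed.

Lemma S3_bound g t p : -1 <= S3 g t p <= 1.
Proof.
  unfold S3. pose proof (sin2_cos2 g) as E1. pose proof (sin2_cos2 t) as E2.
  pose proof (sin2_cos2 p) as E3. unfold Rsqr in *.
  replace (sin g * sin t * cos p + cos g * cos t) with (sin g * (sin t * cos p) + cos g * cos t) by ring.
  apply cs_bound. lra.
  assert (0 <= sin p * sin p) by nra. assert (0 <= sin t * sin t) by nra. nra.
Qed.

Lemma cont_h h h' t : C1on h h' -> -1 <= t <= 1 -> continuous h t.
Proof. intros H Ht. apply (ex_derive_continuous (K := R_AbsRing) (V := R_NormedModule) h). exists (h' t). apply H; auto. Qed.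

Lemma Derive_h h h' u : C1on h h' -> -1 <= u <= 1 -> Derive (fun x => h x) u = h' u.
Proof. intros H Hu. apply is_derive_unique. apply H; auto. Qed.

Lemma exd_h h h' u : C1on h h' -> -1 <= u <= 1 -> ex_derive (fun x => h x) u.
Proof. intros H Hu. exists (h' u). apply H; auto. Qed.

Lemma G3_S : G3 S3.
Proof.
  unfold S3. apply G3_plus; apply G3_mult.
  apply G3_mult. apply G3_sin1. apply G3_sin2. apply G3_cos3. apply G3_cos1. apply G3_cos2.
Qed.

Lemma G3_hS h h' : C1on h h' -> G3 (fun g t p => h (S3 g t p)).
Proof.
  intros H. apply G3_comp. intros; eapply cont_h; eauto. apply G3_S. apply S3_bound.
Qed.

Lemma G3_h'S h h' : C1on h h' -> G3 (fun g t p => h' (S3 g t p)).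
Proof.
  intros H. apply G3_comp. intros; apply H; auto. apply G3_S. apply S3_bound.
Qed.

Ltac g3 := repeat first [ apply G3_plus | apply G3_minus | apply G3_mult | apply G3_opp
  | apply G3_sin1 | apply G3_sin2 | apply G3_sin3 | apply G3_cos1 | apply G3_cos2 | apply G3_cos3
  | apply G3_const ].

Ltac adh H := auto_derive; [ eapply exd_h; [exact H | apply S3_bound]
  | rewrite (Derive_h _ _ _ H) by apply S3_bound ].

Lemma c2d_cont2 f x y : continuity_2d_pt f x y -> continuous (fun v => f x v) y.
Proof.
  intros H. apply continuity_pt_filterlim. apply continuity_pt_locally. intros eps.
  destruct (H eps) as [d Hd]. apply locR. exists d. intros. apply Hd; auto.
  unfold Rminus; rewrite Rplus_opp_r, Rabs_R0; apply cond_pos.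
Qed.

Lemma c2d_cont1 f x y : continuity_2d_pt f x y -> continuous (fun v => f v y) x.
Proof.
  intros H. apply continuity_pt_filterlim. apply continuity_pt_locally. intros eps.
  destruct (H eps) as [d Hd]. apply locR. exists d. intros. apply Hd; auto.
  unfold Rminus; rewrite Rplus_opp_r, Rabs_R0; apply cond_pos.
Qed.

Definition fS h g t p := h (S3 g t p) * sin t.
Definition Sg g t p := cos g * sin t * cos p - sin g * cos t.
Definition St g t p := sin g * cos t * cos p - cos g * sin t.
Definition Df (h' : R -> R) g t p := h' (S3 g t p) * Sg g t p * sin t.
Definition Jf h g t := RInt (fun p => fS h g t p) 0 (2*PI).
Definition Ff h g := RInt (fun t => Jf h g t) 0 PI.

Lemma G3_fS h h' : C1on h h' -> G3 (fS h).
Proof. intros H. unfold fS. apply G3_mult. eapply G3_hS; eauto. g3. Qed.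

Lemma G3_Df h h' : C1on h h' -> G3 (Df h').
Proof. intros H. unfold Df, Sg. apply G3_mult. apply G3_mult. eapply G3_h'S; eauto. g3. g3. Qed.

Lemma dJ h h' g t : C1on h h' ->
  is_derive (fun z => Jf h z t) g (RInt (fun p => Df h' g t p) 0 (2*PI)).
Proof.
  intros H. unfold Jf.
  assert (D : forall u v, is_derive (fun z => fS h z t v) u (Df h' u t v)).
  { intros. unfold fS, Df, Sg, S3. adh H. ring. }
  rewrite (RInt_ext (Df h' g t) (fun p => Derive (fun z => fS h z t p) g)).
  2:{ intros; symmetry; apply is_derive_unique, D. }
  apply (is_derive_RInt_param (fun u p => fS h u t p)).
  - apply filter_forall. intros. eexists; apply D.
  - intros. apply continuity_2d_pt_ext with (fun u v => Df h' u t v).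
    intros; symmetry; apply is_derive_unique, D. apply UC3_c2d_13. apply (G3_Df h h' H).
  - apply filter_forall; intros; apply UC3_exRInt. apply (G3_fS h h' H).
Qed.

Lemma dF h h' g : C1on h h' ->
  is_derive (Ff h) g (RInt (fun t => RInt (fun p => Df h' g t p) 0 (2*PI)) 0 PI).
Proof.
  intros H. unfold Ff.
  rewrite (RInt_ext (fun t => RInt (fun p => Df h' g t p) 0 (2*PI)) (fun t => Derive (fun z => Jf h z t) g)).
  2:{ intros; symmetry; apply is_derive_unique, dJ; auto. }
  apply (is_derive_RInt_param (fun u t => Jf h u t)).
  - apply filter_forall. intros. eexists; apply dJ; eauto.
  - intros. apply continuity_2d_pt_ext with (fun u v => RInt (fun p => Df h' u v p) 0 (2*PI)).
    intros; symmetry; apply is_derive_unique, dJ; auto.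
    apply UC3_param. apply (G3_Df h h' H). pose proof PI_RGT_0; lra.
  - apply filter_forall; intros. apply (ex_RInt_continuous (V := R_CompleteNormedModule)).
    intros. apply (c2d_cont2 (fun u v => Jf h u v)). unfold Jf.
    apply UC3_param. apply (G3_fS h h' H). pose proof PI_RGT_0; lra.
Qed.

Lemma RInt_R0 a b : RInt (fun _ => 0) a b = 0.
Proof. rewrite (RInt_const (V := R_CompleteNormedModule)). unfold scal; simpl; unfold mult; simpl. ring. Qed.

Lemma step_b h h' g t : C1on h h' ->
  RInt (fun p => cos p * h (S3 g t p) + sin p * (h' (S3 g t p) * - (sin g * sin t * sin p))) 0 (2*PI) = 0.
Proof.
  intros H.
  assert (I : is_RInt (fun p => cos p * h (S3 g t p) + sin p * (h' (S3 g t p) * - (sin g * sin t * sin p))) 0 (2*PI)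
     (minus (sin (2*PI) * h (S3 g t (2*PI))) (sin 0 * h (S3 g t 0)))).
  { apply (is_RInt_derive (V := R_CompleteNormedModule) (fun p => sin p * h (S3 g t p))).
  - intros. unfold S3. adh H. ring.
  - intros. apply (UC3_cont3 (fun g t p => cos p * h (S3 g t p) + sin p * (h' (S3 g t p) * - (sin g * sin t * sin p)))).
    apply G3_plus. apply G3_mult. g3. eapply G3_hS; eauto.
    apply G3_mult. g3. apply G3_mult. eapply G3_h'S; eauto. g3. }
  rewrite (is_RInt_unique _ _ _ _ I). rewrite sin_2PI, sin_0. unfold minus, plus, opp; simpl. ring.
Qed.

Definition dk h h' g t p := cos p * (cos t * h (S3 g t p) + sin t * (h' (S3 g t p) * St g t p)).
Definition Kf h g t := RInt (fun p => cos p * sin t * h (S3 g t p)) 0 (2*PI).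

Lemma G3_dk h h' : C1on h h' -> G3 (dk h h').
Proof.
  intros H. unfold dk, St. apply G3_mult. g3. apply G3_plus; apply G3_mult. g3.
  eapply G3_hS; eauto. g3. apply G3_mult. eapply G3_h'S; eauto. g3.
Qed.

Lemma dK h h' g t : C1on h h' ->
  is_derive (Kf h g) t (RInt (fun p => dk h h' g t p) 0 (2*PI)).
Proof.
  intros H. unfold Kf.
  assert (D : forall u v, is_derive (fun z => cos v * sin z * h (S3 g z v)) u (dk h h' g u v)).
  { intros. unfold dk, St, S3. adh H. ring. }
  rewrite (RInt_ext (dk h h' g t) (fun p => Derive (fun z => cos p * sin z * h (S3 g z p)) t)).
  2:{ intros; symmetry; apply is_derive_unique, D. }
  apply (is_derive_RInt_param (fun u p => cos p * sin u * h (S3 g u p))).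
  - apply filter_forall. intros. eexists; apply D.
  - intros. apply continuity_2d_pt_ext with (fun u v => dk h h' g u v).
    intros; symmetry; apply is_derive_unique, D. apply UC3_c2d_23. apply (G3_dk h h' H).
  - apply filter_forall; intros.
    apply (UC3_exRInt (fun g t p => cos p * sin t * h (S3 g t p))).
    apply G3_mult. g3. eapply G3_hS; eauto.
Qed.

Lemma Df_split h h' g t p :
  Df h' g t p = - dk h h' g t p + cos t * (cos p * h (S3 g t p) + sin p * (h' (S3 g t p) * - (sin g * sin t * sin p))).
Proof.
  unfold Df, dk, Sg, St. pose proof (sin2_cos2 p) as E. unfold Rsqr in E.
  replace (sin g * cos t) with (sin g * cos t * (sin p * sin p + cos p * cos p)) at 1 by (rewrite E; ring).
  ring.
Qed.

Lemma inner_eq h h' g t : C1on h h' ->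
  RInt (fun p => Df h' g t p) 0 (2*PI) = - RInt (fun p => dk h h' g t p) 0 (2*PI).
Proof.
  intros H.
  set (q := fun p => cos p * h (S3 g t p) + sin p * (h' (S3 g t p) * - (sin g * sin t * sin p))).
  rewrite (RInt_ext _ (fun p => plus (opp (dk h h' g t p)) (scal (cos t) (q p)))).
  2:{ intros. rewrite (Df_split h). unfold q, plus, opp, scal; simpl. unfold mult; simpl. ring. }
  assert (Eq : ex_RInt q 0 (2*PI)).
  { apply (UC3_exRInt (fun g t p => cos p * h (S3 g t p) + sin p * (h' (S3 g t p) * - (sin g * sin t * sin p)))).
    apply G3_plus. apply G3_mult. g3. eapply G3_hS; eauto.
    apply G3_mult. g3. apply G3_mult. eapply G3_h'S; eauto. g3. }
  assert (Ed : ex_RInt (dk h h' g t) 0 (2*PI)).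
  { apply UC3_exRInt. apply (G3_dk h h' H). }
  rewrite (RInt_plus (V := R_CompleteNormedModule)).
  2:{ apply (ex_RInt_opp (V := R_CompleteNormedModule)); auto. }
  2:{ apply (ex_RInt_scal (V := R_CompleteNormedModule)); auto. }
  rewrite (RInt_opp (V := R_CompleteNormedModule)) by auto.
  rewrite (RInt_scal (V := R_CompleteNormedModule)) by auto.
  unfold q. rewrite step_b by auto.
  unfold plus, opp, scal; simpl. unfold mult; simpl. rewrite Rmult_0_r, Rplus_0_r; reflexivity.
Qed.

Lemma zero_lemma h h' g : C1on h h' ->
  RInt (fun t => RInt (fun p => Df h' g t p) 0 (2*PI)) 0 PI = 0.
Proof.
  intros H.
  rewrite (RInt_ext _ (fun t => opp (RInt (fun p => dk h h' g t p) 0 (2*PI)))).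
  2:{ intros. rewrite (inner_eq h) by auto. reflexivity. }
  assert (I : is_RInt (fun t => RInt (fun p => dk h h' g t p) 0 (2*PI)) 0 PI (minus (Kf h g PI) (Kf h g 0))).
  { apply (is_RInt_derive (V := R_CompleteNormedModule) (Kf h g)).
    - intros. apply dK; auto.
    - intros. apply (c2d_cont2 (fun u v => RInt (fun p => dk h h' g v p) 0 (2*PI)) 0).
      apply (UC3_param (fun u v p => dk h h' g v p)).
      destruct (G3_dk h h' H) as [U _]. intros eps. destruct (U eps) as [d Hd].
      exists d. intros. apply Hd; auto. unfold Rminus; rewrite Rplus_opp_r, Rabs_R0; apply cond_pos.
      pose proof PI_RGT_0; lra. }
  rewrite (RInt_opp (V := R_CompleteNormedModule)). 2:{ eexists; exact I. }
  rewrite (is_RInt_unique _ _ _ _ I).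
  unfold Kf. rewrite sin_PI, sin_0.
  rewrite (RInt_ext (V := R_CompleteNormedModule) (fun p => cos p * 0 * h (S3 g PI p)) (fun _ => 0)) by (intros; rewrite Rmult_0_r, Rmult_0_l; reflexivity).
  rewrite (RInt_ext (V := R_CompleteNormedModule) (fun p => cos p * 0 * h (S3 g 0 p)) (fun _ => 0)) by (intros; rewrite Rmult_0_r, Rmult_0_l; reflexivity).
  rewrite RInt_R0. unfold minus, plus, opp; simpl. ring.
Qed.

Lemma F_const h h' g : C1on h h' -> Ff h g = Ff h 0.
Proof.
  intros H. destruct (MVT_gen (Ff h) 0 g (fun _ => 0)) as [c [_ Hc]].
  - intros. pose proof (dF h h' x H) as D. rewrite (zero_lemma h) in D by auto. exact D.
  - intros. apply continuity_pt_filterlim.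
    apply (ex_derive_continuous (K := R_AbsRing) (V := R_NormedModule)). eexists; apply dF; eauto.
  - lra.
Qed.

Lemma shift_lemma (G : R -> R) b : (forall u, continuous G u) -> (forall u, G (u + 2*PI) = G u) ->
  RInt (fun p => G (p - b)) 0 (2*PI) = RInt G 0 (2*PI).
Proof.
  intros HC HP.
  assert (EX : forall x y, ex_RInt G x y).
  { intros. apply (ex_RInt_continuous (V := R_CompleteNormedModule)). intros; apply HC. }
  rewrite (RInt_ext (V := R_CompleteNormedModule) _ (fun y => scal 1 (G (1 * y + - b)))).
  2:{ intros. unfold scal; simpl; unfold mult; simpl. rewrite Rmult_1_l, Rmult_1_l. reflexivity. }
  rewrite (RInt_comp_lin (V := R_CompleteNormedModule)) by apply EX.
  replace (1 * 0 + - b) with (- b) by ring. replace (1 * (2*PI) + - b) with (2*PI - b) by ring.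
  rewrite <- (RInt_Chasles (V := R_CompleteNormedModule) G (-b) 0 (2*PI - b)) by apply EX.
  assert (E1 : RInt G (-b) 0 = RInt G (2*PI - b) (2*PI)).
  { rewrite (RInt_ext (V := R_CompleteNormedModule) G (fun y => scal 1 (G (1 * y + - (2*PI)))) (2*PI - b) (2*PI)).
    rewrite (RInt_comp_lin (V := R_CompleteNormedModule)) by apply EX. f_equal; ring.
    intros. unfold scal; simpl; unfold mult; simpl. rewrite Rmult_1_l, Rmult_1_l.
    rewrite <- (HP (x + - (2*PI))). f_equal; ring. }
  rewrite E1. unfold plus; simpl. rewrite Rplus_comm.
  apply (RInt_Chasles (V := R_CompleteNormedModule)); apply EX.
Qed.

Lemma polar a1 a2 : exists b, a1 = sqrt (a1 ^ 2 + a2 ^ 2) * cos b /\ a2 = sqrt (a1 ^ 2 + a2 ^ 2) * sin b.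
Proof.
  set (r := sqrt (a1 ^ 2 + a2 ^ 2)).
  assert (Hr : r * r = a1 ^ 2 + a2 ^ 2) by (apply sqrt_sqrt; nra).
  assert (Hr0 : 0 <= r) by apply sqrt_pos.
  destruct (Req_dec r 0) as [Z | NZ].
  - exists 0. rewrite Z in *. split; nra.
  - assert (Hp : 0 < r) by lra.
    set (c := a1 / r).
    assert (Hc2 : c * c + (a2 / r) * (a2 / r) = 1) by (unfold c; field_simplify; [rewrite <- Hr; field|]; lra).
    assert (Hc : -1 <= c <= 1) by (split; nra).
    assert (Hs : sqrt (1 - c²) = Rabs (a2 / r)).
    { rewrite <- sqrt_Rsqr_abs. f_equal. unfold Rsqr. lra. }
    destruct (Rle_dec 0 a2) as [P | N].
    + exists (acos c). rewrite cos_acos, sin_acos by auto. rewrite Hs.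
      rewrite Rabs_pos_eq by (apply Rdiv_le_0_compat; lra). unfold c. split; field; lra.
    + exists (- acos c). rewrite cos_neg, sin_neg, cos_acos, sin_acos by auto. rewrite Hs.
      assert (a2 / r < 0). { unfold Rdiv. assert (0 < /r) by (apply Rinv_0_lt_compat; lra). nra. }
      rewrite Rabs_left by lra. unfold c. split; field; lra.
Qed.

Lemma F0_val h h' : C1on h h' -> Ff h 0 = 2 * PI * RInt h (-1) 1.
Proof.
  intros H. unfold Ff, Jf, fS, S3. rewrite sin_0, cos_0.
  rewrite (RInt_ext (V := R_CompleteNormedModule) _ (fun t => scal (- (2 * PI)) (scal (- sin t) (h (cos t))))).
  2:{ intros t _. rewrite (RInt_ext (V := R_CompleteNormedModule) _ (fun _ => h (cos t) * sin t)).
      2:{ intros. f_equal. f_equal. ring. }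
      rewrite (RInt_const (V := R_CompleteNormedModule)). unfold scal; simpl; unfold mult; simpl. ring. }
  assert (I : is_RInt (fun y => scal (- sin y) (h (cos y))) 0 PI (RInt h (cos 0) (cos PI))).
  { apply (is_RInt_comp (V := R_CompleteNormedModule)).
    - intros. eapply cont_h; eauto. apply COS_bound.
    - intros. split. auto_derive; auto. ring.
      apply (ex_derive_continuous (K := R_AbsRing) (V := R_NormedModule) (fun y => - sin y)). auto_derive; auto. }
  apply (is_RInt_scal (V := R_CompleteNormedModule) _ _ _ (- (2 * PI))) in I.
  apply is_RInt_unique.
  replace (2 * PI * RInt h (-1) 1) with (scal (- (2 * PI)) (RInt h (cos 0) (cos PI))). exact I.
  rewrite cos_0, cos_PI.
  rewrite <- (opp_RInt_swap (V := R_CompleteNormedModule)).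
  - unfold scal, opp; simpl; unfold mult; simpl. ring.
  - apply (ex_RInt_continuous (V := R_CompleteNormedModule)). intros z Hz.
    rewrite Rmin_left, Rmax_right in Hz by lra. eapply cont_h; eauto.
Qed.

Theorem INV h h' a1 a2 a3 : C1on h h' -> a1 ^ 2 + a2 ^ 2 + a3 ^ 2 = 1 ->
  RInt (fun t => RInt (fun p => h (a1 * sin t * cos p + a2 * sin t * sin p + a3 * cos t) * sin t) 0 (2*PI)) 0 PI
  = 2 * PI * RInt h (-1) 1.
Proof.
  intros H Hn. destruct (polar a1 a2) as [b [E1 E2]].
  set (rho := sqrt (a1 ^ 2 + a2 ^ 2)) in *.
  assert (Ha3 : -1 <= a3 <= 1) by (split; nra).
  set (g := acos a3).
  assert (Cg : cos g = a3) by (apply cos_acos; auto).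
  assert (Sg' : sin g = rho).
  { unfold g. rewrite sin_acos by auto. unfold rho. f_equal. unfold Rsqr. lra. }
  rewrite <- (F0_val h h') by auto. rewrite <- (F_const h h' g) by auto.
  unfold Ff. apply RInt_ext. intros t _. unfold Jf.
  rewrite (RInt_ext (V := R_CompleteNormedModule) _ (fun p => fS h g t (p - b))).
  2:{ intros. unfold fS, S3. rewrite Sg', Cg, cos_minus. rewrite E1, E2. f_equal. f_equal. ring. }
  apply shift_lemma.
  - intros. apply (UC3_cont3 (fS h)). apply (G3_fS h h' H).
  - intros. unfold fS, S3. rewrite cos_plus, cos_2PI, sin_2PI. f_equal. f_equal. ring.
Qed.

Definition dotu a1 a2 a3 t p := a1 * sin t * cos p + a2 * sin t * sin p + a3 * cos t.

Lemma dotu_bound a1 a2 a3 t p : a1 ^ 2 + a2 ^ 2 + a3 ^ 2 = 1 -> -1 <= dotu a1 a2 a3 t p <= 1.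
Proof.
  intros Hn. unfold dotu.
  pose proof (sin2_cos2 t) as E2. pose proof (sin2_cos2 p) as E3. unfold Rsqr in *.
  replace (a1 * sin t * cos p + a2 * sin t * sin p + a3 * cos t) with (a1 * (sin t * cos p) + a2 * (sin t * sin p) + a3 * cos t) by ring.
  set (u1 := sin t * cos p). set (u2 := sin t * sin p). set (u3 := cos t).
  assert (Hu : u1 * u1 + u2 * u2 + u3 * u3 = 1).
  { unfold u1, u2, u3. replace (sin t * cos p * (sin t * cos p) + sin t * sin p * (sin t * sin p)) with (sin t * sin t * (sin p * sin p + cos p * cos p)) by ring. rewrite E3. lra. }
  pose proof (Rle_0_sqr (a1 - u1)). pose proof (Rle_0_sqr (a2 - u2)). pose proof (Rle_0_sqr (a3 - u3)).
  pose proof (Rle_0_sqr (a1 + u1)). pose proof (Rle_0_sqr (a2 + u2)). pose proof (Rle_0_sqr (a3 + u3)).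
  unfold Rsqr in *.
  assert (X1 : (a1 - u1) * (a1 - u1) + (a2 - u2) * (a2 - u2) + (a3 - u3) * (a3 - u3) = (a1 ^ 2 + a2 ^ 2 + a3 ^ 2) - 2 * (a1 * u1 + a2 * u2 + a3 * u3) + (u1 * u1 + u2 * u2 + u3 * u3)) by ring.
  assert (X2 : (a1 + u1) * (a1 + u1) + (a2 + u2) * (a2 + u2) + (a3 + u3) * (a3 + u3) = (a1 ^ 2 + a2 ^ 2 + a3 ^ 2) + 2 * (a1 * u1 + a2 * u2 + a3 * u3) + (u1 * u1 + u2 * u2 + u3 * u3)) by ring.
  split; lra.
Qed.

Lemma G3_hdot h h' a1 a2 a3 : C1on h h' -> a1 ^ 2 + a2 ^ 2 + a3 ^ 2 = 1 ->
  G3 (fun _ t p => h (dotu a1 a2 a3 t p) * sin t).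
Proof.
  intros H Hn. apply G3_mult. 2: g3.
  apply (G3_comp h (fun _ t p => dotu a1 a2 a3 t p)).
  intros; eapply cont_h; eauto.
  assert (G : G3 (fun _ t p => dotu a1 a2 a3 t p)) by (unfold dotu; g3). apply G.
  intros; apply dotu_bound; auto.
Qed.

Lemma ex_outer h h' a1 a2 a3 : C1on h h' -> a1 ^ 2 + a2 ^ 2 + a3 ^ 2 = 1 ->
  ex_RInt (fun t => RInt (fun p => h (dotu a1 a2 a3 t p) * sin t) 0 (2*PI)) 0 PI.
Proof.
  intros H Hn. apply (ex_RInt_continuous (V := R_CompleteNormedModule)). intros.
  apply (c2d_cont2 (fun _ t => RInt (fun p => h (dotu a1 a2 a3 t p) * sin t) 0 (2*PI)) 0).
  apply (UC3_param (fun _ t p => h (dotu a1 a2 a3 t p) * sin t)).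
  apply (G3_hdot h h'); auto. pose proof PI_RGT_0; lra.
Qed.

Lemma INV2 h h' a1 a2 a3 : C1on h h' -> a1 ^ 2 + a2 ^ 2 + a3 ^ 2 = 1 ->
  RInt (fun t => RInt (fun p => h (dotu a1 a2 a3 t p) * sin t) 0 (2*PI)) 0 PI
  = 2 * PI * RInt h (-1) 1.
Proof. intros. unfold dotu. eapply INV; eauto. Qed.

Lemma sphere_red Rad (f : pt -> R) h h' a1 a2 a3 : C1on h h' -> a1 ^ 2 + a2 ^ 2 + a3 ^ 2 = 1 ->
  (forall t p, f (sph Rad t p) * (Rad ^ 2 * sin t) = h (dotu a1 a2 a3 t p) * sin t) ->
  sphere_int Rad f = 2 * PI * RInt h (-1) 1.
Proof.
  intros H Hn E. rewrite <- (INV2 h h' a1 a2 a3) by auto. unfold sphere_int.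
  apply RInt_ext. intros. apply RInt_ext. intros. apply E.
Qed.

Lemma sphere_redC Rad (f : pt -> Complex.C) h1 h1' h2 h2' a1 a2 a3 :
  C1on h1 h1' -> C1on h2 h2' -> a1 ^ 2 + a2 ^ 2 + a3 ^ 2 = 1 ->
  (forall t p, scal (Rad ^ 2 * sin t) (f (sph Rad t p)) =
     (h1 (dotu a1 a2 a3 t p) * sin t, h2 (dotu a1 a2 a3 t p) * sin t)) ->
  sphere_intC Rad f = (2 * PI * RInt h1 (-1) 1, 2 * PI * RInt h2 (-1) 1).
Proof.
  intros H1 H2 Hn E. rewrite <- (INV2 h1 h1' a1 a2 a3), <- (INV2 h2 h2' a1 a2 a3) by auto.
  unfold sphere_intC.
  rewrite (RInt_ext (V := C_R_CompleteNormedModule) _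
    (fun t => (RInt (fun p => h1 (dotu a1 a2 a3 t p) * sin t) 0 (2*PI),
               RInt (fun p => h2 (dotu a1 a2 a3 t p) * sin t) 0 (2*PI)))).
  - apply (is_RInt_unique (V := C_R_CompleteNormedModule)). apply (is_RInt_fct_extend_pair (U := R_NormedModule) (V := R_NormedModule)); simpl;
    apply (RInt_correct (V := R_CompleteNormedModule)); eapply ex_outer; eauto.
  - intros t _. apply (is_RInt_unique (V := C_R_CompleteNormedModule)).
    apply (is_RInt_ext (V := C_R_NormedModule) (fun p => (h1 (dotu a1 a2 a3 t p) * sin t, h2 (dotu a1 a2 a3 t p) * sin t))).
    { intros; symmetry; apply E. }
    apply (is_RInt_fct_extend_pair (U := R_NormedModule) (V := R_NormedModule)); simpl;
    apply (RInt_correct (V := R_CompleteNormedModule));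
    [apply (UC3_exRInt (fun _ t p => h1 (dotu a1 a2 a3 t p) * sin t) 0) | apply (UC3_exRInt (fun _ t p => h2 (dotu a1 a2 a3 t p) * sin t) 0)];
    [apply (G3_hdot h1 h1') | apply (G3_hdot h2 h2')]; auto.
Qed.

Definition Dd r Rad s := r ^ 2 + Rad ^ 2 - 2 * r * Rad * s.
Definition cc r Rad := Rabs (r ^ 2 - Rad ^ 2).
Definition ww r Rad s := cc r Rad / Dd r Rad s.

Lemma Dd_pos r Rad s : 0 < r -> 0 < Rad -> r <> Rad -> -1 <= s <= 1 -> 0 < Dd r Rad s.
Proof.
  intros. unfold Dd. assert (A : 0 < Rsqr (r - Rad)) by (apply Rsqr_pos_lt; lra).
  assert (B : 0 <= (2 * r * Rad) * (1 - s)) by (apply Rmult_le_pos; [nra|lra]).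
  unfold Rsqr in A. nra.
Qed.

Lemma cc_pos r Rad : 0 < r -> 0 < Rad -> r <> Rad -> 0 < cc r Rad.
Proof.
  intros. unfold cc. apply Rabs_pos_lt. intro E.
  assert ((r - Rad) * (r + Rad) = 0) by (rewrite <- E; ring).
  apply Rmult_integral in H2. destruct H2; lra.
Qed.

Lemma ww_pos r Rad s : 0 < r -> 0 < Rad -> r <> Rad -> -1 <= s <= 1 -> 0 < ww r Rad s.
Proof. intros. unfold ww. apply Rdiv_lt_0_compat. apply cc_pos; auto. apply Dd_pos; auto. Qed.

Lemma omega_sph x Rad t p : 0 < norm3 x -> 0 < Rad -> norm3 x <> Rad ->
  let r := norm3 x in
  omega x (sph Rad t p) = ww r Rad (dotu (fst (fst x) / r) (snd (fst x) / r) (snd x / r) t p).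
Proof.
  intros Hr HR Hne r. destruct x as [[x1 x2] x3]. simpl.
  assert (Hn : x1 ^ 2 + x2 ^ 2 + x3 ^ 2 = r ^ 2).
  { unfold r, norm3, nsq. rewrite pow2_sqrt; auto. nra. }
  assert (Hun : (x1 / r) ^ 2 + (x2 / r) ^ 2 + (x3 / r) ^ 2 = 1).
  { unfold Rdiv. rewrite !Rpow_mult_distr. rewrite <- !Rmult_plus_distr_r, Hn. field. fold r in Hr. lra. }
  pose proof (dotu_bound _ _ _ t p Hun) as Hb.
  pose proof (Dd_pos r Rad _ Hr HR Hne Hb) as HD.
  pose proof (sin2_cos2 t) as E2. pose proof (sin2_cos2 p) as E3. unfold Rsqr in *.
  assert (Es : nsq (sph Rad t p) = Rad ^ 2).
  { unfold nsq, sph. replace ((Rad * sin t * cos p) ^ 2 + (Rad * sin t * sin p) ^ 2 + (Rad * cos t) ^ 2)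
      with (Rad ^ 2 * (sin t * sin t * (sin p * sin p + cos p * cos p) + cos t * cos t)) by ring.
    rewrite E3, Rmult_1_r, E2. ring. }
  assert (Ed : dsq (x1, x2, x3) (sph Rad t p) = Dd r Rad (dotu (x1 / r) (x2 / r) (x3 / r) t p)).
  { unfold dsq, sph, Dd, dotu.
    replace ((x1 - Rad * sin t * cos p) ^ 2 + (x2 - Rad * sin t * sin p) ^ 2 + (x3 - Rad * cos t) ^ 2)
      with ((x1 ^ 2 + x2 ^ 2 + x3 ^ 2) - 2 * Rad * (x1 * sin t * cos p + x2 * sin t * sin p + x3 * cos t)
            + Rad ^ 2 * (sin t * sin t * (sin p * sin p + cos p * cos p) + cos t * cos t)) by ring.
    rewrite E3, Rmult_1_r, E2, Hn. field. fold r in Hr. lra. }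
  unfold omega. rewrite Ed, Es. unfold ww, cc.
  replace (nsq (x1, x2, x3)) with (r ^ 2) by (unfold nsq; lra).
  rewrite Rabs_div by lra. rewrite (Rabs_pos_eq (Dd _ _ _)) by lra. reflexivity.
Qed.

Lemma RInt_anti h h' P : C1on h h' -> (forall s, -1 <= s <= 1 -> is_derive P s (h s)) ->
  @eq R (RInt h (-1) 1) (P 1 - P (-1)).
Proof.
  intros H D. apply is_RInt_unique.
  apply (is_RInt_derive (V := R_CompleteNormedModule) P h).
  - intros. rewrite Rmin_left, Rmax_right in H0 by lra. auto.
  - intros. rewrite Rmin_left, Rmax_right in H0 by lra. eapply cont_h; eauto.
Qed.


Definition h0 r Rad s := Rad ^ 2 * ww r Rad s.
Definition h0' r Rad s := Rad ^ 2 * (cc r Rad * (2 * r * Rad) / (Dd r Rad s) ^ 2).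

Lemma C1_h0 r Rad : 0 < r -> 0 < Rad -> r <> Rad -> C1on (h0 r Rad) (h0' r Rad).
Proof.
  intros Hr HR Hne s Hs. pose proof (Dd_pos r Rad s Hr HR Hne Hs) as HD. unfold Dd in HD.
  split.
  - unfold h0, h0', ww, Dd. cbv beta. auto_derive. lra. field. lra.
  - apply (ex_derive_continuous (K := R_AbsRing) (V := R_NormedModule)).
    unfold h0', Dd. auto_derive. apply Rmult_integral_contrapositive_currified; nra.
Qed.

Definition Lam r Rad := ln ((Rad + r) / Rabs (Rad - r)).

Lemma ww_vals r Rad : 0 < r -> 0 < Rad -> r <> Rad ->
  ln (ww r Rad 1) = Lam r Rad /\ ln (ww r Rad (-1)) = - Lam r Rad.
Proof.
  intros Hr HR Hne. set (q := Rabs (Rad - r)).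
  assert (Hq : 0 < q) by (apply Rabs_pos_lt; lra).
  assert (Hc : cc r Rad = q * (Rad + r)).
  { unfold cc, q. replace (r ^ 2 - Rad ^ 2) with ((Rad - r) * (- (Rad + r))) by ring.
    rewrite Rabs_mult, Rabs_Ropp, (Rabs_pos_eq (Rad + r)) by lra. reflexivity. }
  assert (Hq2 : q ^ 2 = (Rad - r) ^ 2) by (unfold q; apply pow2_abs).
  assert (E1 : ww r Rad 1 = (Rad + r) / q).
  { unfold ww, Dd. rewrite Hc. replace (r ^ 2 + Rad ^ 2 - 2 * r * Rad * 1) with (q ^ 2) by (rewrite Hq2; ring).
    field. lra. }
  assert (E2 : ww r Rad (-1) = / ((Rad + r) / q)).
  { unfold ww, Dd. rewrite Hc. field. repeat split; nra. }
  unfold Lam. fold q. split.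
  - rewrite E1. reflexivity.
  - rewrite E2. apply ln_Rinv. apply Rdiv_lt_0_compat; lra.
Qed.

Definition h1 r Rad b s := Rad ^ 2 * (ww r Rad s * cos (b * ln (ww r Rad s))).
Definition h1' r Rad b s := Rad ^ 2 * (cc r Rad * (2 * r * Rad) / (Dd r Rad s) ^ 2 *
   (cos (b * ln (ww r Rad s)) - b * sin (b * ln (ww r Rad s)))).
Definition h2 r Rad b s := Rad ^ 2 * (ww r Rad s * sin (b * ln (ww r Rad s))).
Definition h2' r Rad b s := Rad ^ 2 * (cc r Rad * (2 * r * Rad) / (Dd r Rad s) ^ 2 *
   (sin (b * ln (ww r Rad s)) + b * cos (b * ln (ww r Rad s)))).

Lemma C1_h1 r Rad b : 0 < r -> 0 < Rad -> r <> Rad -> C1on (h1 r Rad b) (h1' r Rad b).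
Proof.
  intros Hr HR Hne s Hs. pose proof (Dd_pos r Rad s Hr HR Hne Hs) as HD.
  pose proof (cc_pos r Rad Hr HR Hne) as HC. unfold Dd in HD.
  assert (HE : r * (r * 1) + Rad * (Rad * 1) + - (2 * r * Rad * s) = r ^ 2 + Rad ^ 2 - 2 * r * Rad * s) by ring.
  split.
  - unfold h1, h1', ww, Dd. cbv beta. auto_derive.
    + rewrite HE. repeat split; try lra. apply Rmult_lt_0_compat; [lra | apply Rinv_0_lt_compat; lra].
    + unfold Rdiv. rewrite HE. set (D := r ^ 2 + Rad ^ 2 - 2 * r * Rad * s) in *.
      set (L := ln (cc r Rad * / D)). field. lra.
  - apply (ex_derive_continuous (K := R_AbsRing) (V := R_NormedModule)).
    unfold h1', ww, Dd. cbv beta. auto_derive. rewrite HE. repeat split; try lra;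
    try (apply Rmult_integral_contrapositive_currified; lra);
    try (apply Rmult_lt_0_compat; [lra | apply Rinv_0_lt_compat; lra]).
Qed.

Lemma C1_h2 r Rad b : 0 < r -> 0 < Rad -> r <> Rad -> C1on (h2 r Rad b) (h2' r Rad b).
Proof.
  intros Hr HR Hne s Hs. pose proof (Dd_pos r Rad s Hr HR Hne Hs) as HD.
  pose proof (cc_pos r Rad Hr HR Hne) as HC. unfold Dd in HD.
  assert (HE : r * (r * 1) + Rad * (Rad * 1) + - (2 * r * Rad * s) = r ^ 2 + Rad ^ 2 - 2 * r * Rad * s) by ring.
  split.
  - unfold h2, h2', ww, Dd. cbv beta. auto_derive.
    + rewrite HE. repeat split; try lra. apply Rmult_lt_0_compat; [lra | apply Rinv_0_lt_compat; lra].
    + unfold Rdiv. rewrite HE. set (D := r ^ 2 + Rad ^ 2 - 2 * r * Rad * s) in *.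
      set (L := ln (cc r Rad * / D)). field. lra.
  - apply (ex_derive_continuous (K := R_AbsRing) (V := R_NormedModule)).
    unfold h2', ww, Dd. cbv beta. auto_derive. rewrite HE. repeat split; try lra;
    try (apply Rmult_integral_contrapositive_currified; lra);
    try (apply Rmult_lt_0_compat; [lra | apply Rinv_0_lt_compat; lra]).
Qed.

Ltac posgoals HE := rewrite HE; repeat split; try lra;
    try (apply Rmult_integral_contrapositive_currified; lra);
    try (apply Rmult_lt_0_compat; [lra | apply Rinv_0_lt_compat; lra]).

Lemma int_h0 r Rad : 0 < r -> 0 < Rad -> r <> Rad ->
  @eq R (RInt (h0 r Rad) (-1) 1) (Rad ^ 2 * cc r Rad / (2 * r * Rad) * (2 * Lam r Rad)).
Proof.
  intros Hr HR Hne.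
  rewrite (RInt_anti _ (h0' r Rad) (fun s => Rad ^ 2 * cc r Rad / (2 * r * Rad) * ln (ww r Rad s))).
  - destruct (ww_vals r Rad Hr HR Hne) as [A B]. rewrite A, B. ring.
  - apply C1_h0; auto.
  - intros s Hs. pose proof (Dd_pos r Rad s Hr HR Hne Hs) as HD.
    pose proof (cc_pos r Rad Hr HR Hne) as HC. unfold Dd in HD.
    assert (HE : r * (r * 1) + Rad * (Rad * 1) + - (2 * r * Rad * s) = r ^ 2 + Rad ^ 2 - 2 * r * Rad * s) by ring.
    unfold h0, ww, Dd. auto_derive. posgoals HE.
    unfold Rdiv. rewrite HE. field. lra.
Qed.

Lemma int_h1 r Rad b : 0 < r -> 0 < Rad -> r <> Rad -> b <> 0 ->
  @eq R (RInt (h1 r Rad b) (-1) 1) (Rad ^ 2 * cc r Rad / (b * (2 * r * Rad)) * (2 * sin (b * Lam r Rad))).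
Proof.
  intros Hr HR Hne Hb.
  rewrite (RInt_anti _ (h1' r Rad b) (fun s => Rad ^ 2 * cc r Rad / (b * (2 * r * Rad)) * sin (b * ln (ww r Rad s)))).
  - destruct (ww_vals r Rad Hr HR Hne) as [A B]. rewrite A, B.
    replace (b * - Lam r Rad) with (- (b * Lam r Rad)) by ring. rewrite sin_neg. ring.
  - apply C1_h1; auto.
  - intros s Hs. pose proof (Dd_pos r Rad s Hr HR Hne Hs) as HD.
    pose proof (cc_pos r Rad Hr HR Hne) as HC. unfold Dd in HD.
    assert (HE : r * (r * 1) + Rad * (Rad * 1) + - (2 * r * Rad * s) = r ^ 2 + Rad ^ 2 - 2 * r * Rad * s) by ring.
    unfold h1, ww, Dd. auto_derive. posgoals HE.
    unfold Rdiv. rewrite HE. set (D := r ^ 2 + Rad ^ 2 - 2 * r * Rad * s) in *.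
    set (L := ln (cc r Rad * / D)). field. lra.
Qed.

Lemma int_h2 r Rad b : 0 < r -> 0 < Rad -> r <> Rad -> b <> 0 ->
  @eq R (RInt (h2 r Rad b) (-1) 1) 0.
Proof.
  intros Hr HR Hne Hb.
  rewrite (RInt_anti _ (h2' r Rad b) (fun s => - (Rad ^ 2 * cc r Rad / (b * (2 * r * Rad))) * cos (b * ln (ww r Rad s)))).
  - destruct (ww_vals r Rad Hr HR Hne) as [A B]. rewrite A, B.
    replace (b * - Lam r Rad) with (- (b * Lam r Rad)) by ring. rewrite cos_neg. ring.
  - apply C1_h2; auto.
  - intros s Hs. pose proof (Dd_pos r Rad s Hr HR Hne Hs) as HD.
    pose proof (cc_pos r Rad Hr HR Hne) as HC. unfold Dd in HD.
    assert (HE : r * (r * 1) + Rad * (Rad * 1) + - (2 * r * Rad * s) = r ^ 2 + Rad ^ 2 - 2 * r * Rad * s) by ring.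
    unfold h2, ww, Dd. auto_derive. posgoals HE.
    unfold Rdiv. rewrite HE. set (D := r ^ 2 + Rad ^ 2 - 2 * r * Rad * s) in *.
    set (L := ln (cc r Rad * / D)). field. lra.
Qed.

Lemma unit_a x : 0 < norm3 x ->
  (fst (fst x) / norm3 x) ^ 2 + (snd (fst x) / norm3 x) ^ 2 + (snd x / norm3 x) ^ 2 = 1.
Proof.
  intros Hr. destruct x as [[x1 x2] x3]. cbn [fst snd].
  assert (Hn : x1 ^ 2 + x2 ^ 2 + x3 ^ 2 = norm3 (x1, x2, x3) ^ 2).
  { unfold norm3, nsq. rewrite pow2_sqrt; auto. nra. }
  unfold Rdiv. rewrite !Rpow_mult_distr. rewrite <- !Rmult_plus_distr_r, Hn. field. lra.
Qed.

Theorem corollary5 (Rad : R) (x : pt) (b : R) :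
  0 < Rad -> 0 < norm3 x -> norm3 x <> Rad -> b <> 0 ->
  sphere_intC Rad (fun y => Cpow_pos (omega x y) (1, b)) =
    RtoC (2 * PI * Rad / norm3 x * (Rabs (Rad ^ 2 - norm3 x ^ 2) / b) *
          sin (b * ln ((Rad + norm3 x) / Rabs (Rad - norm3 x))))
  /\
  sphere_int Rad (fun y => omega x y) =
    2 * PI * Rad / norm3 x * Rabs (Rad ^ 2 - norm3 x ^ 2) *
      ln ((Rad + norm3 x) / Rabs (Rad - norm3 x)).
Proof.
  intros HR Hr Hne Hb.
  pose proof (unit_a x Hr) as Hu.
  set (r := norm3 x) in *.
  set (a1 := fst (fst x) / r) in *. set (a2 := snd (fst x) / r) in *. set (a3 := snd x / r) in *.
  assert (Ecc : Rabs (Rad ^ 2 - r ^ 2) = cc r Rad) by (unfold cc; apply Rabs_minus_sym).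
  rewrite Ecc. fold (Lam r Rad).
  split.
  - rewrite (sphere_redC Rad _ (h1 r Rad b) (h1' r Rad b) (h2 r Rad b) (h2' r Rad b) a1 a2 a3).
    + rewrite (int_h1 r Rad b), (int_h2 r Rad b) by auto. unfold RtoC. f_equal.
      * field. split; lra.
      * ring.
    + apply C1_h1; auto.
    + apply C1_h2; auto.
    + exact Hu.
    + intros t p. rewrite omega_sph by auto. fold r. fold a1 a2 a3.
      pose proof (ww_pos r Rad (dotu a1 a2 a3 t p) Hr HR Hne (dotu_bound a1 a2 a3 t p Hu)) as Hw.
      set (w := ww r Rad (dotu a1 a2 a3 t p)) in *.
      unfold Cpow_pos, Cexp, Cmult, RtoC, h1, h2. fold w. simpl.
      replace (1 * ln w - b * 0) with (ln w) by ring.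
      replace (1 * 0 + b * ln w) with (b * ln w) by ring.
      rewrite exp_ln by auto.
      apply injective_projections; simpl; unfold scal; simpl; unfold mult; simpl; ring.
  - rewrite (sphere_red Rad _ (h0 r Rad) (h0' r Rad) a1 a2 a3).
    + rewrite (int_h0 r Rad) by auto. field. lra.
    + apply C1_h0; auto.
    + exact Hu.
    + intros t p. rewrite omega_sph by auto. fold r. fold a1 a2 a3. unfold h0. ring.
Qed.
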